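(* Let $(A_k,b_k,c_k)_{k\in\mathbb{Z}}$ and $(\tilde A_k,\tilde b_k,\tilde c_k)_{k\in\mathbb{Z}}$ (with $A_k,\tilde A_k\in\mathbb{R}^{n\times n}$, $b_k,\tilde b_k\in\mathbb{R}^{n\times1}$, $c_k,\tilde c_k\in\mathbb{R}^{1\times n}$) be algebraically equivalent via invertible matrices $\{T_k\}_{k\in\mathbb{Z}}$, i.e. $\tilde A_k=T_{k+1}A_kT_k^{-1}$, $\tilde b_k=T_{k+1}b_k$, $\tilde c_k=c_kT_k^{-1}$. Then for every $k\in\mathbb{Z}$, $\det(T_k)\,\tilde c_k\operatorname{adj}(\tilde A_k)\tilde b_k=\det(T_{k+1})\,c_k\operatorname{adj}(A_k)b_k$.
   Context: $\operatorname{adj}(A)$ denotes the adjugate of $A$ (the matrix with $A\operatorname{adj}(A)=\operatorname{adj}(A)A=\det(A)I$, whose $(j,i)$ entry is $(-1)^{i+j}$ times the $(i,j)$ minor). *)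

(* Defs.v *)
From mathcomp Require Import all_boot all_order all_algebra.
From mathcomp Require Export reals.
Set Implicit Arguments. Unset Strict Implicit. Unset Printing Implicit Defensive.

(* Main.v *)
Require Import Defs.
From mathcomp Require Import all_boot all_order all_algebra.
From mathcomp Require Import reals.
Import GRing.Theory Num.Theory.
Local Open Scope ring_scope.

Lemma adjM_nz (F : idomainType) n (P M : 'M[F]_n) :
  \det (P *m M) != 0 -> \adj (P *m M) = \adj M *m \adj P.
Proof.
move=> hd.
have h : (\adj (P *m M) - \adj M *m \adj P) *m (P *m M) = 0.
  rewrite mulmxBl mul_adj_mx -!mulmxA (mulmxA (\adj P)) mul_adj_mx.
  by rewrite mul_scalar_mx -scalemxAr mul_adj_mx scale_scalar_mx det_mulmx mulrC subrr.
have := congr1 (mulmx^~ (\adj (P *m M))) h.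
rewrite mul0mx -mulmxA mul_mx_adj mul_mx_scalar => /eqP.
rewrite scalemx_eq0 (negbTE hd) /= subr_eq0 => /eqP //.
Qed.

Lemma adjPAQ (R : fieldType) n (P A Q : 'M[R]_n) :
  P \in unitmx -> Q \in unitmx ->
  \adj (P *m A *m Q) = \adj Q *m \adj A *m \adj P.
Proof.
move=> hP hQ.
pose Ap := char_poly_mx (- A).
have hAp : \det Ap != 0.
  apply/eqP=> h; have := char_poly_monic (- A); rewrite /char_poly -/Ap h.
  by rewrite monicE lead_coef0 eq_sym oner_eq0.
pose f := horner_eval (0 : R).
have hmap : forall B : 'M[R]_n, map_mx f (map_mx polyC B) = B.
  by move=> B; apply/matrixP=> i j; rewrite !mxE /f horner_evalE hornerC.
have hApm : map_mx f Ap = A.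
  apply/matrixP=> i j; rewrite !mxE /f horner_evalE.
  by rewrite hornerD hornerN hornerC hornerMn hornerX mul0rn add0r opprK.
have nzP : \det (map_mx (@polyC R) P) != 0.
  by rewrite det_map_mx polyC_eq0 -unitfE -unitmxE.
have nzQ : \det (map_mx (@polyC R) Q) != 0.
  by rewrite det_map_mx polyC_eq0 -unitfE -unitmxE.
have e1 := @adjM_nz _ _ (map_mx (@polyC R) P *m Ap) (map_mx (@polyC R) Q).
have e2 := @adjM_nz _ _ (map_mx (@polyC R) P) Ap.
have key : \adj (map_mx (@polyC R) P *m Ap *m map_mx (@polyC R) Q) =
   \adj (map_mx (@polyC R) Q) *m \adj Ap *m \adj (map_mx (@polyC R) P).
  rewrite e1; last by rewrite !det_mulmx !mulf_neq0.
  by rewrite e2 ?mulmxA // det_mulmx mulf_neq0.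
have := congr1 (map_mx f) key.
rewrite !map_mxM !map_mx_adj !map_mxM => h.
by rewrite -(hmap P) -(hmap Q) -hApm; exact: h.
Qed.
Theorem claim10 (R : realType) (n : nat)
  (A At : int -> 'M[R]_n) (b bt : int -> 'cV[R]_n) (c ct : int -> 'rV[R]_n)
  (T : int -> 'M[R]_n)
  (hT : forall k, T k \in unitmx)
  (hA : forall k, At k = T (k + 1) *m A k *m invmx (T k))
  (hb : forall k, bt k = T (k + 1) *m b k)
  (hc : forall k, ct k = c k *m invmx (T k)) :
  forall k : int,
    \det (T k) *: (ct k *m \adj (At k) *m bt k)
    = \det (T (k + 1)) *: (c k *m \adj (A k) *m b k).
Proof.
move=> k.
rewrite hA hb hc adjPAQ ?unitmx_inv //.
have -> : c k *m invmx (T k) *m (\adj (invmx (T k)) *m \adj (A k) *m \adj (T (k + 1)))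
   *m (T (k + 1) *m b k)
   = c k *m (invmx (T k) *m \adj (invmx (T k))) *m \adj (A k)
     *m (\adj (T (k + 1)) *m T (k + 1)) *m b k.
  by rewrite !mulmxA.
rewrite mul_mx_adj mul_adj_mx mul_mx_scalar -scalemxAl mul_mx_scalar.
rewrite -!scalemxAl scalerA scalerA det_inv mulrA.
rewrite mulrC mulrA mulVf ?mul1r //.
by rewrite -unitfE -unitmxE.
Qed.
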